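(* Let $\mathbb{F}\subseteq\mathbb{C}$ be a subfield closed under complex conjugation, $m\ge2$, $N\ge1$, and let $\zeta_1,\dots,\zeta_{m-1}\in\mathcal{P}_N^-[\mathbb{F}]$. Let $\mathbf{v}_j(z)=(v_{1j}(z),\dots,v_{m-1,j}(z),\widetilde{v_{mj}}(z))^T$, $j=1,\dots,m$, with all $v_{ij}\in\mathcal{P}_N^+[\mathbb{F}]$, be any $m$ solutions of the system $(\mathcal{S})$, and let $V(z)=(\mathbf{v}_1(z),\dots,\mathbf{v}_m(z))$ be the $m\times m$ matrix with these columns. Then $\det V(z)$ is constant on $\mathbb{C}\setminus\{0\}$.
   Context: For a Laurent polynomial $p(z)=\sum_k c_kz^k$ write $\widetilde{p}(z)=\sum_k\overline{c_k}z^{-k}$. $\mathcal{P}_N^+[\mathbb{F}]=\{\sum_{k=0}^Nc_kz^k: c_k\in\mathbb{F}\}$, $\mathcal{P}_N^-[\mathbb{F}]=\{\sum_{k=1}^Nc_kz^{-k}: c_k\in\mathbb{F}\}$. Let $\mathcal{P}^+$ denote the set of polynomials in $z$ (Laurent polynomials with no negative powers). The system $(\mathcal{S})$ in unknowns $x_1,\dots,x_m$ is $$\zeta_i(z)x_m(z)-\widetilde{x_i}(z)\in\mathcal{P}^+\ (i=1,\dots,m-1),\qquad \sum_{i=1}^{m-1}\zeta_i(z)x_i(z)+\widetilde{x_m}(z)\in\mathcal{P}^+.$$ A vector $(u_1,\dots,u_{m-1},\widetilde{u_m})^T$ with $u_i\in\mathcal{P}_N^+[\mathbb{F}]$ is called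 a solution of $(\mathcal{S})$ if all these conditions hold with $x_i=u_i$, $i=1,\dots,m$. *)

(* Defs.v *)
From HB Require Import structures.
From mathcomp Require Import all_boot all_order all_algebra.
From mathcomp Require Import complex.
From mathcomp Require Import reals.
Set Implicit Arguments. Unset Strict Implicit. Unset Printing Implicit Defensive.
Import Order.TTheory GRing.Theory Num.Theory.
Local Open Scope ring_scope.

(* Laurent polynomials over C = R[i] (R : realType), represented as a pair
   (a, p) denoting the Laurent polynomial z^{-a} * p(z). *)
Record laurent (C : numClosedFieldType) := Laurent { lshift : nat; lpoly : {poly C} }.

Section Laurent.
Variable C : numClosedFieldType.

(* value of a Laurent polynomial at z (meaningful for z != 0) *)
Definition leval (L : laurent C) (z : C) : C := (lpoly L).[z] / z ^+ lshift L.

(* L belongs to P^+ : no negative powers of z *)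
Definition in_Pplus (L : laurent C) : Prop :=
  forall k : nat, (k < lshift L)%N -> (lpoly L)`_k = 0.

Definition lpol (p : {poly C}) : laurent C := Laurent 0 p.

Definition ladd (L M : laurent C) : laurent C :=
  Laurent (lshift L + lshift M)
    (lpoly L * 'X^(lshift M) + lpoly M * 'X^(lshift L)).

Definition lopp (L : laurent C) : laurent C := Laurent (lshift L) (- lpoly L).

Definition lsub (L M : laurent C) : laurent C := ladd L (lopp M).

Definition lmul (L M : laurent C) : laurent C :=
  Laurent (lshift L + lshift M) (lpoly L * lpoly M).

Definition lzero : laurent C := lpol 0.

(* q(z^{-1}) for a polynomial q: equals z^{-d} * sum_k q_k z^{d-k}, d = deg q *)
Definition lpinv (q : {poly C}) : laurent C :=
  Laurent (size q).-1 (\poly_(k < size q) q`_((size q).-1 - k)).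

Definition pconj (p : {poly C}) : {poly C} := map_poly (fun x => x^*) p.

(* tilde: for L(z) = sum_k c_k z^k, tilde L (z) = sum_k conj(c_k) z^{-k}.
   With L = z^{-a} P(z):  tilde L = z^a * conj(P)(z^{-1}). *)
Definition ltilde (L : laurent C) : laurent C :=
  lmul (lpol 'X^(lshift L)) (lpinv (pconj (lpoly L))).

Definition in_PNplus (F : {pred C}) (N : nat) (p : {poly C}) : Prop :=
  (size p <= N.+1)%N /\ forall k, p`_k \in F.

(* zeta in P_N^-[F] is given as zeta(z) = q(z^{-1}) with q in P_N^+[F], q_0 = 0 *)
Definition in_PNminus_gen (F : {pred C}) (N : nat) (q : {poly C}) : Prop :=
  in_PNplus F N q /\ q`_0 = 0.

End Laurent.

(* The system (S) for m = n.+1 unknowns, zeta_1..zeta_{m-1} given as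
   zeta i = lpinv (q i), and a candidate solution vector
   (u_1, ..., u_{m-1}, tilde u_m) given by u : 'I_m -> {poly C}. *)
Definition is_solution_S (C : numClosedFieldType) (n : nat)
    (q : 'I_n -> {poly C}) (u : 'I_n.+1 -> {poly C}) : Prop :=
  (forall i : 'I_n,
     in_Pplus (lsub (lmul (lpinv (q i)) (lpol (u ord_max)))
                    (ltilde (lpol (u (widen_ord (leqnSn n) i)))))) /\
  in_Pplus (ladd (\big[@ladd C/lzero C]_(i < n)
                    lmul (lpinv (q i)) (lpol (u (widen_ord (leqnSn n) i))))
                 (ltilde (lpol (u ord_max)))).

Definition sol_vec_eval (C : numClosedFieldType) (n : nat)
    (u : 'I_n.+1 -> {poly C}) (z : C) (i : 'I_n.+1) : C :=
  if i == ord_max then leval (ltilde (lpol (u ord_max))) z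
  else leval (lpol (u i)) z.

(* Main.v *)
Require Import Defs.
From HB Require Import structures.
From mathcomp Require Import all_boot all_order all_algebra.
From mathcomp Require Import complex.
From mathcomp Require Import reals.
From mathcomp Require Import ring zify.
Import Order.TTheory GRing.Theory Num.Theory.
Local Open Scope ring_scope.

From mathcomp Require Import ring zify.
Section H.
Variable C : numClosedFieldType.
Implicit Types (L M : laurent C) (p q : {poly C}) (z : C).

Lemma leval_add L M z : z != 0 -> leval (ladd L M) z = leval L z + leval M z.
Proof.
move=> z0; rewrite /leval /= hornerD !hornerM !hornerXn exprD.
have ha : z ^+ Defs.lshift L != 0 by rewrite expf_neq0.
have hb : z ^+ Defs.lshift M != 0 by rewrite expf_neq0.
by field; apply/andP.
Qed.

Lemma leval_opp L z : leval (lopp L) z = - leval L z.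
Proof. by rewrite /leval /= hornerN mulNr. Qed.

Lemma leval_sub L M z : z != 0 -> leval (lsub L M) z = leval L z - leval M z.
Proof. by move=> z0; rewrite /lsub leval_add // leval_opp. Qed.

Lemma leval_mul L M z : leval (lmul L M) z = leval L z * leval M z.
Proof. by rewrite /leval /= hornerM exprD invfM; ring. Qed.

Lemma leval_lpol p z : leval (lpol p) z = p.[z].
Proof. by rewrite /leval /= expr0 invr1 mulr1. Qed.

Lemma leval_sum n (F : 'I_n -> laurent C) z : z != 0 ->
  leval (\big[@ladd C/lzero C]_(i < n) F i) z = \sum_(i < n) leval (F i) z.
Proof.
move=> z0; apply: (big_rec2 (fun x y => leval x z = y)).
  by rewrite /lzero leval_lpol horner0.
by move=> i x y _ <-; rewrite leval_add.
Qed.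

Lemma leval_lpinv q z : z != 0 -> leval (lpinv q) z = q.[z^-1].
Proof.
move=> z0; rewrite /leval /= horner_poly horner_coef.
set s := size q; set d := s.-1.
rewrite mulr_suml (reindex_inj (@rev_ord_inj s)) /=.
apply: eq_bigr => k _; rewrite /= subnS -/d.
have kd : (k <= d)%N by rewrite /d -ltnS prednK ?ltn_ord //; case: (s) k => [[]|].
have e : (s - k).-1 = (d - k)%N by rewrite /d; lia.
rewrite e subKn //.
rewrite -{2}(subnK kd) exprD invfM exprVn.
have hk : z ^+ k != 0 by rewrite expf_neq0.
by rewrite mulrA -[_ * _ * (z ^+ (d - k))^-1]mulrA mulfV ?mulr1 // expf_neq0.
Qed.

Lemma pconjE p w : (pconj p).[w] = (p.[w^*])^*.
Proof.
by rewrite /pconj -horner_map /= conjCK.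
Qed.

Lemma leval_tilde p z : z != 0 -> leval (ltilde (lpol p)) z = (pconj p).[z^-1].
Proof.
move=> z0; rewrite /ltilde leval_mul leval_lpol leval_lpinv //= expr0 hornerC mul1r.
by [].
Qed.

Lemma leval_Pplus L z : in_Pplus L -> z != 0 ->
  leval L z = (drop_poly (Defs.lshift L) (lpoly L)).[z].
Proof.
move=> hL z0; rewrite /leval.
have ht : take_poly (Defs.lshift L) (lpoly L) = 0.
  by apply/polyP => k; rewrite coef_take_poly coef0; case: ifP => // /hL.
rewrite -{1}(poly_take_drop (Defs.lshift L) (lpoly L)) ht add0r hornerM hornerXn.
have hz : z ^+ Defs.lshift L != 0 by rewrite expf_neq0.
by field.
Qed.

End H.
Section R.
Variable C : fieldType.

Lemma widen_neq_max n (k : 'I_n) : (widen_ord (leqnSn n) k == ord_max) = false.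
Proof. by apply/negbTE; rewrite -(inj_eq val_inj) /= neq_ltn ltn_ord. Qed.

Lemma detPhi n (g : 'I_n.+1 -> C) : g ord_max = 0 ->
  \det (1%:M + \matrix_(i, l) ((i == ord_max)%:R * g l) : 'M[C]_n.+1) = 1.
Proof.
move=> hg; rewrite det_trig.
  apply: big1 => i _; rewrite !mxE eqxx mulr1n.
  by case: eqP => [->|_]; rewrite ?hg ?mulr0 ?mul0r addr0.
apply/is_trig_mxP => i j lij; rewrite !mxE.
have -> : (i == j) = false by apply/negbTE; rewrite neq_ltn lij.
have -> : (i == ord_max) = false.
  by apply/negbTE; rewrite -(inj_eq val_inj) /=; move: lij (ltn_ord j); lia.
by rewrite mul0r addr0.
Qed.

Lemma det_rowop1 n (A : 'M[C]_n.+1) (f : 'I_n -> C) :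
  \det (\matrix_(i, j) (A i j + (i == ord_max)%:R *
          \sum_(k < n) f k * A (widen_ord (leqnSn n) k) j)) = \det A.
Proof.
pose g (l : 'I_n.+1) := if unlift ord_max l is Some k then f k else 0.
have hg : g ord_max = 0 by rewrite /g unlift_none.
have -> : \matrix_(i, j) (A i j + (i == ord_max)%:R *
          \sum_(k < n) f k * A (widen_ord (leqnSn n) k) j) =
   (1%:M + \matrix_(i, l) ((i == ord_max)%:R * g l)) *m A.
  apply/matrixP => i j; rewrite mulmxDl mul1mx !mxE; congr (_ + _).
  rewrite big_ord_recr /= mxE hg mulr0 mul0r addr0 mulr_sumr.
  apply: eq_bigr => k _; rewrite mxE /g.
  have -> : unlift ord_max (widen_ord (leqnSn n) k) = Some k.
    have -> : widen_ord (leqnSn n) k = lift ord_max k by apply: val_inj; symmetry; exact: (lift_max k).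
    by rewrite liftK.
  by rewrite mulrA.
by rewrite det_mulmx detPhi // mul1r.
Qed.

Lemma det_rowop2 n (A : 'M[C]_n.+1) (g : 'I_n.+1 -> C) : g ord_max = 0 ->
  \det (\matrix_(i, j) (A i j + g i * A ord_max j)) = \det A.
Proof.
move=> hg.
have -> : \matrix_(i, j) (A i j + g i * A ord_max j) =
   (1%:M + \matrix_(i, l) (g i * (l == ord_max)%:R)) *m A.
  apply/matrixP => i j; rewrite mulmxDl mul1mx !mxE; congr (_ + _).
  rewrite big_ord_recr /= mxE eqxx mulr1 big1 ?add0r //.
  by move=> k _; rewrite mxE widen_neq_max mulr0 mul0r.
rewrite det_mulmx -det_tr.
have -> : (1%:M + \matrix_(i, l) (g i * (l == ord_max)%:R))^T =
    (1%:M + \matrix_(i, l) ((i == ord_max)%:R * g l) : 'M[C]_n.+1).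
  by rewrite linearD /= tr_scalar_mx; congr (_ + _); apply/matrixP => i j; rewrite !mxE mulrC.
by rewrite detPhi // mul1r.
Qed.

End R.

Section K.
Variable C : numFieldType.

Lemma poly_const_inv (P Q : {poly C}) :
  (forall z, z != 0 -> P.[z] = Q.[z^-1]) -> (size P <= 1)%N.
Proof.
move=> hPQ.
set e := (size Q).-1.
set Qr := \poly_(k < size Q) Q`_(e - k).
have hQr : forall z : C, z != 0 -> Qr.[z] = z ^+ e * Q.[z^-1].
  move=> z z0; rewrite horner_poly horner_coef mulr_sumr.
  rewrite (reindex_inj (@rev_ord_inj (size Q))) /=.
  apply: eq_bigr => k _.
  have kd : (k <= e)%N by rewrite /e -ltnS prednK ?ltn_ord //; case: (size Q) k => [[]|].
  have ee : (size Q - k.+1)%N = (e - k)%N by rewrite /e; lia.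
  rewrite ee subKn // -{2}(subnK kd) exprD exprVn.
  have hk : z ^+ k != 0 by rewrite expf_neq0.
  by rewrite mulrCA -mulrA mulfV // mulr1.
set T := P * 'X^e - Qr.
have T0 : T = 0.
  pose rs := mkseq (fun i => (i.+1)%:R : C) (size T).
  apply: (@roots_geq_poly_eq0 _ _ rs).
  - apply/allP => x /mapP [i _ ->]; rewrite /root /T hornerD hornerN hornerM hornerXn.
    have z0 : (i.+1)%:R != 0 :> C by rewrite pnatr_eq0.
    by rewrite hQr // hPQ // mulrC subrr.
  - rewrite map_inj_uniq ?iota_uniq // => a b /eqP; rewrite eqr_nat => /eqP; case.
    by [].
  - by rewrite size_mkseq.
have eq1 : P * 'X^e = Qr by apply/eqP; rewrite -subr_eq0 -/T T0.
have [->|P0] := eqVneq P 0; first by rewrite size_poly0.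
have := size_poly (size Q) (fun k => Q`_(e - k)); rewrite -/Qr -eq1 size_mulXn //.
rewrite /e; case: (size Q) => [|s] /=; lia.
Qed.

End K.

Theorem lemma4 (R : realType) (F : {pred R[i]})
  (HF : divring_closed F) (HFc : forall x, x \in F -> x^* \in F)
  (n : nat) (hn : (1 <= n)%N) (N : nat) (hN : (1 <= N)%N)
  (q : 'I_n -> {poly R[i]}) (hq : forall i, in_PNminus_gen F N (q i))
  (v : 'I_n.+1 -> 'I_n.+1 -> {poly R[i]})
  (hv : forall j i, in_PNplus F N (v j i))
  (hsol : forall j, is_solution_S q (v j)) :
  exists c : R[i], forall z : R[i], z != 0 ->
    \det (\matrix_(i, j) sol_vec_eval (v j) z i) = c.
Proof.
pose Vz z := \matrix_(i, j) sol_vec_eval (v j) z i.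
pose L2 j := ladd (\big[@ladd _/lzero _]_(i < n)
   lmul (lpinv (q i)) (lpol (v j (widen_ord (leqnSn n) i))))
   (ltilde (lpol (v j ord_max))).
pose R2 j := drop_poly (Defs.lshift (L2 j)) (lpoly (L2 j)).
pose L1 j k := lsub (lmul (lpinv (q k)) (lpol (v j ord_max)))
   (ltilde (lpol (v j (widen_ord (leqnSn n) k)))).
pose R1 j k := drop_poly (Defs.lshift (L1 j k)) (lpoly (L1 j k)).
pose M1 := \matrix_(i, j) (if i == ord_max then R2 j else v j i).
pose M2 := \matrix_(i, j) (match unlift ord_max i with
   Some k => - pconj (R1 j k) | None => pconj (v j ord_max) end).
have hV1 : forall z, z != 0 -> \det (Vz z) = (\det M1).[z].
  move=> z z0; rewrite -(@det_rowop1 _ _ (Vz z) (fun k => (q k).[z^-1])).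
  transitivity (\det (map_mx (horner_eval z) M1)); last by rewrite det_map_mx.
  congr (\det _); apply/matrixP => i j; rewrite !mxE /sol_vec_eval.
  case: (boolP (i == ord_max)) => [/eqP ei|ni]; first subst i.
    rewrite ?eqxx ?mul1r horner_evalE.
    have := @leval_Pplus _ _ z (hsol j).2 z0; rewrite -/(L2 j) -/(R2 j) => <-.
    rewrite /L2 leval_add // leval_sum // addrC; congr (_ + _).
    apply: eq_bigr => k _; rewrite leval_mul leval_lpinv // !mxE /sol_vec_eval.
    by rewrite widen_neq_max.
  by rewrite (_ : false%:R = 0) // mul0r addr0 horner_evalE leval_lpol.
have hV2 : forall z, z != 0 -> \det (Vz z) = (\det M2).[z^-1].
  move=> z z0.
  pose g (i : 'I_n.+1) := match unlift ord_max i with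
     Some k => - (pconj (q k)).[z] | None => 0 end.
  rewrite -(@det_rowop2 _ _ (Vz z) g); last by rewrite /g unlift_none.
  transitivity (\det (map_mx (horner_eval z^-1) M2)); last by rewrite det_map_mx.
  congr (\det _); apply/matrixP => i j; rewrite !mxE /sol_vec_eval /g.
  case: (unliftP ord_max i) => [k ->|->]; last first.
    by rewrite eqxx mul0r addr0 horner_evalE leval_tilde.
  have lw : lift ord_max k = widen_ord (leqnSn n) k.
    by apply: val_inj; exact: (lift_max k).
  rewrite lw widen_neq_max eqxx horner_evalE leval_lpol leval_tilde //.
  set w := (z^*)^-1.
  have w0 : w != 0 by rewrite invr_eq0 conjC_eq0.
  have h := @leval_Pplus _ _ w ((hsol j).1 k) w0.
  rewrite -/(L1 j k) -/(R1 j k) /L1 leval_sub // leval_mul leval_lpinv //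
    leval_lpol leval_tilde // invrK in h.
  have h' : (_)^* = (_)^* := congr1 (fun x => x^*) h.
  have cB : forall a b : R[i], (a - b)^* = a^* - b^* by move=> a b; exact: rmorphB.
  have cM : forall a b : R[i], (a * b)^* = a^* * b^* by move=> a b; exact: rmorphM.
  have cV : forall a : R[i], (a^-1)^* = (a^*)^-1 by move=> a; exact: fmorphV.
  rewrite cB cM !pconjE !conjCK in h'.
  rewrite hornerN !pconjE.
  have wc : w^* = z^-1 by rewrite /w cV conjCK.
  rewrite cV -/w -h'. ring.
have hs := @poly_const_inv _ _ _ (fun z z0 => etrans (esym (hV1 z z0)) (hV2 z z0)).
exists (\det M1)`_0 => z z0.
have := hV1 z z0; rewrite /Vz => ->.
by rewrite {1}(size1_polyC hs) hornerC.
Qed.
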